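(* For every family of unsatisfiable CNFs $\mathcal{F}=\{F_n\}$ with $w(\mathcal{F}\vdash_{\mathsf{Res}}\bot)>w_F$, the CNF family $\mathcal{F}^{w}_{\mathsf{wLB}}$ has resolution refutations of width $O(w_F\log N)$, where $N$ is the number of variables of $\mathcal{F}^w_{\mathsf{wLB}}$.
   Context: $\mathcal{F}^w_{\mathsf{wLB}}$ is the CNF encoding of the statement ``$F_n$ has no width-$w_F$ resolution refutation'': its variables encode (in binary) a purported resolution refutation $C_0,\dots,C_{L-1}$ of $F_n$ in which each node consists of at most $w_F$ literals, a tag resolution/weakening, the indices of its (earlier) predecessors and the resolved variable (each node uses $O(w_F\log n+\log L)$ bits); for every potential solution of the corresponding refuter problem (an index $i$ whose node violates the validity conditions: resolution $C_j=x_a\vee D$, $C_k=\overline x_a\vee E$, $C_i=D\vee E$; weakening $C_i=C_j\vee D$; last clause empty), the CNF contains clauses expressing that this node is not invalid, obtained by writing the negation of the block-depth-$3$ verifying decision tree as a CNF. Thus the CNF is unsatisfiable exactly because the width lower bound holds. *)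

(* Defs.v *)
From mathcomp Require Import all_boot.
Set Implicit Arguments. Unset Strict Implicit. Unset Printing Implicit Defensive.

(* A literal is (variable, polarity): (x, true) is x, (x, false) is ~x. *)
Definition lit := (nat * bool)%type.
(* A clause is read as the SET of its literals. *)
Definition clause := seq lit.
Definition cnf := seq clause.

Definition lit_true (a : nat -> bool) (l : lit) : bool := a l.1 == l.2.
Definition clause_sat (a : nat -> bool) (C : clause) : bool := has (lit_true a) C.
Definition satisfiable (F : cnf) : Prop := exists a : nat -> bool, all (clause_sat a) F.

Definition width (C : clause) : nat := size (undup C).

Definition subclause (A B : clause) : bool := all (fun l => l \in B) A.
Definition clause_eq (A B : clause) : bool := subclause A B && subclause B A.

Definition is_resolvent (A B : clause) (x : nat) (C : clause) : bool :=
  [&& (x, true) \in A, (x, false) \in B &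
      clause_eq C ([seq l <- A | l != (x, true)] ++ [seq l <- B | l != (x, false)])].

Definition res_refutation (Ax : clause -> Prop) (P : seq clause) : Prop :=
  (forall i, i < size P ->
     (exists2 A, Ax A & clause_eq A (nth [::] P i)) \/
     (exists j k x, [/\ j < i, k < i &
                      is_resolvent (nth [::] P j) (nth [::] P k) x (nth [::] P i)]))
  /\ [::] \in P.

Definition has_refutation_of_width (Ax : clause -> Prop) (w : nat) : Prop :=
  exists P, res_refutation Ax P /\ all (fun C => width C <= w) P.

Definition cnf_axioms (F : cnf) : clause -> Prop := fun C => C \in F.

(* Parameters: F (the CNF F_n), n = number of variables of F, w = w_F,
   L = length of the purported refutation C_0, ..., C_{L-1}.            *)

Definition nbits (k : nat) : nat := up_log 2 k.

Definition decode (a : nat -> bool) (start len : nat) : nat :=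
  \sum_(t < len) (a (start + t) : nat) * 2 ^ t.

Section Encoding.
Variables (F : cnf) (n w L : nat).

Definition var_bits := nbits n.
Definition idx_bits := nbits L.
(* a literal slot: present bit, sign bit, variable index *)
Definition slot_size := var_bits.+2.
(* block of a node: w literal slots, axiom-tag bit, resolution-tag bit,
   two predecessor indices, resolved variable *)
Definition block_size := w * slot_size + 2 + 2 * idx_bits + var_bits.
(* N = number of variables of F^w_wLB *)
Definition wLB_nvars := L * block_size.

Definition boff (i : nat) := i * block_size.
Definition soff (i s : nat) := boff i + s * slot_size.
Definition toff (i : nat) := boff i + w * slot_size.

Definition slot_present (a : nat -> bool) i s := a (soff i s).
Definition slot_lit (a : nat -> bool) i s : lit := (decode a (soff i s).+2 var_bits, a (soff i s).+1).
Definition node_clause (a : nat -> bool) (i : nat) : clause :=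
  [seq slot_lit a i s | s <- [seq s <- iota 0 w | slot_present a i s]].
Definition tag_axiom (a : nat -> bool) i := a (toff i).
Definition tag_res (a : nat -> bool) i := a (toff i).+1.
Definition pred1 (a : nat -> bool) i := decode a (toff i + 2) idx_bits.
Definition pred2 (a : nat -> bool) i := decode a (toff i + 2 + idx_bits) idx_bits.
Definition resvar (a : nat -> bool) i := decode a (toff i + 2 + 2 * idx_bits) var_bits.

Definition node_valid (a : nat -> bool) (i : nat) : bool :=
  let C := node_clause a in
  [&& all (fun l => l.1 < n) (C i),
      (i == L.-1) ==> (C i == [::]) &
      if tag_axiom a i then has (fun A => clause_eq (C i) A) F
      else if tag_res a i then
        [&& pred1 a i < i, pred2 a i < i, resvar a i < n &
            is_resolvent (C (pred1 a i)) (C (pred2 a i)) (resvar a i) (C i)]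
      else (pred1 a i < i) && subclause (C (pred1 a i)) (C i)].

(* blocks read by the (block-depth-3) verifying decision tree for node i *)
Definition queried_blocks (a : nat -> bool) (i : nat) : seq nat :=
  i :: (if tag_axiom a i then [::]
        else if tag_res a i then [seq j <- [:: pred1 a i; pred2 a i] | j < i]
        else [seq j <- [:: pred1 a i] | j < i]).

Definition queried_vars (a : nat -> bool) i : seq nat :=
  flatten [seq iota (boff j) block_size | j <- queried_blocks a i].

(* negation of the path of the decision tree followed under a *)
Definition path_clause (a : nat -> bool) i : clause := [seq (p, ~~ a p) | p <- queried_vars a i].

(* the clauses of F^w_wLB: for every index i < L and every accepting path
   (one on which node i is found invalid), the negation of that path *)
Definition wLB_axiom (C : clause) : Prop :=
  exists (i : nat) (a : nat -> bool), [/\ i < L, ~~ node_valid a i & C = path_clause a i].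

End Encoding.

(* Main.v *)
Require Import Defs.
From mathcomp Require Import all_boot zify.
From Stdlib Require Import Classical.
Set Implicit Arguments. Unset Strict Implicit. Unset Printing Implicit Defensive.

Definition resC (A B : clause) (x : nat) : clause :=
  [seq l <- A | l != (x, true)] ++ [seq l <- B | l != (x, false)].

Inductive der (Ax : clause -> Prop) (W : nat) : clause -> Prop :=
| der_ax A : Ax A -> width A <= W -> der Ax W A
| der_res A B x : der Ax W A -> der Ax W B -> (x, true) \in A -> (x, false) \in B ->
    width (resC A B x) <= W -> der Ax W (resC A B x).

Lemma der_width Ax W C : der Ax W C -> width C <= W.
Proof. by case. Qed.

Lemma subclause_refl C : subclause C C.
Proof. by apply/allP. Qed.

Lemma is_res_resC A B x : (x, true) \in A -> (x, false) \in B -> is_resolvent A B x (resC A B x).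
Proof. by move=> h1 h2; rewrite /is_resolvent h1 h2 /clause_eq subclause_refl. Qed.

Lemma width_size C : width C <= size C.
Proof. exact: size_undup. Qed.

Lemma width_sub A B : subclause A B -> width A <= width B.
Proof.
move/allP=> h; apply: uniq_leq_size; first exact: undup_uniq.
by move=> l; rewrite !mem_undup => /h.
Qed.

Definition good_lines (Ax : clause -> Prop) (P : seq clause) : Prop :=
  forall i, i < size P ->
     (exists2 A, Ax A & clause_eq A (nth [::] P i)) \/
     (exists j k x, [/\ j < i, k < i &
                      is_resolvent (nth [::] P j) (nth [::] P k) x (nth [::] P i)]).

Lemma good_cat Ax P1 P2 : good_lines Ax P1 -> good_lines Ax P2 -> good_lines Ax (P1 ++ P2).
Proof.
move=> h1 h2 i; rewrite size_cat => hi.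
case: (ltnP i (size P1)) => hi1.
  case: (h1 i hi1) => [[A hA hc]|[j [k [x [hj hk hr]]]]].
    by left; exists A => //; rewrite nth_cat hi1.
  right; exists j, k, x; split => //.
  by rewrite !nth_cat hi1 (ltn_trans hj hi1) (ltn_trans hk hi1).
have hi2 : i - size P1 < size P2 by lia.
have e : forall t, nth [::] (P1 ++ P2) (t + size P1) = nth [::] P2 t.
  by move=> t; rewrite nth_cat ltnNge leq_addl /= addnK.
have ei : i = (i - size P1) + size P1 by lia.
case: (h2 _ hi2) => [[A hA hc]|[j [k [x [hj hk hr]]]]].
  by left; exists A => //; rewrite ei e.
right; exists (j + size P1), (k + size P1), x; split; try lia.
by rewrite ei !e.
Qed.


Lemma good_snoc Ax P C j k x : good_lines Ax P -> j < size P -> k < size P ->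
  is_resolvent (nth [::] P j) (nth [::] P k) x C -> good_lines Ax (P ++ [:: C]).
Proof.
move=> g hj hk hr i; rewrite size_cat /= addn1 ltnS => hi.
case: (ltnP i (size P)) => hi2.
  case: (g i hi2) => [[A' hA' hc]|[j' [k' [y [hj' hk' hr']]]]].
    by left; exists A' => //; rewrite nth_cat hi2.
  right; exists j', k', y; split => //.
  by rewrite !nth_cat hi2 (ltn_trans hj' hi2) (ltn_trans hk' hi2).
have ei : i = size P by lia.
right; exists j, k, x; split; try lia.
by rewrite !nth_cat hj hk ei ltnn subnn.
Qed.

Lemma der_seq Ax W C : der Ax W C ->
  exists P, [/\ good_lines Ax P, all (fun D => width D <= W) P & C \in P].
Proof.
elim=> {C} [A hA hw | A B x dA [PA [gA wA iA]] dB [PB [gB wB iB]] hA hB hw].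
  exists [:: A]; split; rewrite ?mem_seq1 //=; last by rewrite hw.
  move=> i; rewrite /= ltnS leqn0 => /eqP ->; left; exists A => //.
  by rewrite /clause_eq /= subclause_refl.
exists ((PA ++ PB) ++ [:: resC A B x]); split.
- apply: (good_snoc (j := index A PA) (k := size PA + index B PB) (x := x)).
  + exact: good_cat.
  + by rewrite size_cat; apply: ltn_addr; rewrite index_mem.
  + by rewrite size_cat ltn_add2l index_mem.
  + have -> : nth [::] (PA ++ PB) (index A PA) = A.
      by rewrite nth_cat index_mem iA nth_index.
    have -> : nth [::] (PA ++ PB) (size PA + index B PB) = B.
      by rewrite nth_cat ltnNge leq_addr /= addKn nth_index.
    exact: is_res_resC.
- by rewrite all_cat all_cat wA wB /= hw.
- by rewrite mem_cat mem_seq1 eqxx orbT.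
Qed.

Definition negc (a : nat -> bool) (S : seq nat) : clause := [seq (p, ~~ a p) | p <- S].

Lemma subP A B : reflect {subset A <= B} (subclause A B).
Proof. exact: allP. Qed.

Lemma complete Ax W E X : size E + size X <= W ->
  (forall b, exists2 C, der Ax W C & subclause C (E ++ negc b X)) ->
  exists2 C, der Ax W C & subclause C E.
Proof.
elim: X => [|p X IH] hs H.
  by case: (H (fun _ => true)) => C dC; rewrite cats0; exists C.
apply: IH; first by rewrite /= in hs; lia.
move=> b.
case: (boolP (p \in X)) => hpX.
  case: (H b) => C dC /subP hC; exists C => //; apply/subP => l /hC.
  rewrite !mem_cat /= in_cons => /orP [->//|/orP [/eqP->|->]]; last by rewrite orbT.
  by rewrite (map_f (fun q => (q, ~~ b q)) hpX) orbT.
pose bt t := fun q => if q == p then t else b q.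
have en : forall t, negc (bt t) X = negc b X.
  move=> t; apply/eq_in_map => q hq; rewrite /bt.
  by case: eqP => // e; rewrite -e hq in hpX.
case: (H (bt true)) => C1 d1 /subP h1.
case: (H (bt false)) => C0 d0 /subP h0.
rewrite /= /bt eqxx /= in h1 h0. rewrite en in h1. rewrite en in h0.
have gen : forall C l, der Ax W C -> {subset C <= E ++ l :: negc b X} -> l \notin C ->
   exists2 C, der Ax W C & subclause C (E ++ negc b X).
  move=> C l dC hC hl; exists C => //; apply/subP => l' hl'.
  move: (hC _ hl'); rewrite !mem_cat in_cons => /orP [->//|/orP [/eqP e|->]]; last by rewrite orbT.
  by rewrite -e hl' in hl.

case: (boolP ((p, false) \in C1)) => hf; last exact: (gen C1 (p, false) d1 h1 hf).

case: (boolP ((p, true) \in C0)) => ht; last exact: (gen C0 (p, true) d0 h0 ht).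
have hsub : subclause (resC C0 C1 p) (E ++ negc b X).
  apply/subP => l; rewrite mem_cat !mem_filter => /orP [/andP [hl hl0]|/andP [hl hl1]].
    move: (h0 _ hl0); rewrite !mem_cat in_cons => /orP [->//|/orP [/eqP e|->]]; last by rewrite orbT.
    by rewrite e eqxx in hl.
  move: (h1 _ hl1); rewrite !mem_cat in_cons => /orP [->//|/orP [/eqP e|->]]; last by rewrite orbT.
  by rewrite e eqxx in hl.
exists (resC C0 C1 p) => //; apply: der_res => //.
apply: leq_trans (width_sub hsub) _; apply: leq_trans (width_size _) _.
by rewrite size_cat size_map; rewrite /= in hs; lia.
Qed.

Section Gsec.
Variables (F : cnf) (w : nat).
Hypothesis hnoref : ~ has_refutation_of_width (cnf_axioms F) w.

Definition G (C : clause) : Prop := exists2 D, der (cnf_axioms F) w D & subclause D C.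

Lemma sub_trans A B C : subclause A B -> subclause B C -> subclause A C.
Proof. by move=> /subP h1 /subP h2; apply/subP => l /h1 /h2. Qed.

Lemma G_ax C A : A \in F -> clause_eq C A -> width C <= w -> G C.
Proof.
move=> hA /andP [h1 h2] hw; exists A => //; apply: der_ax => //.
exact: leq_trans (width_sub h2) hw.
Qed.

Lemma G_weak A C : G A -> subclause A C -> G C.
Proof. by move=> [D dD hD] h; exists D => //; apply: sub_trans hD h. Qed.

Lemma G_res A B x C : G A -> G B -> is_resolvent A B x C -> width C <= w -> G C.
Proof.
move=> [A' dA /subP hA] [B' dB /subP hB] /and3P [hxA hxB /andP [_ /subP hC]] hw.
case: (boolP ((x, true) \in A')) => ha; last first.
  exists A' => //; apply/subP => l hl; apply: hC; rewrite mem_cat mem_filter hA // andbT.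
  by apply/orP; left; apply: contraNneq ha => <-.
case: (boolP ((x, false) \in B')) => hb; last first.
  exists B' => //; apply/subP => l hl; apply: hC; rewrite mem_cat (mem_filter _ _ B) hB // andbT.
  by apply/orP; right; apply: contraNneq hb => <-.
have hs : subclause (resC A' B' x) C.
  apply/subP => l; rewrite mem_cat !mem_filter => /orP [/andP [h1 h2]|/andP [h1 h2]].
    by apply: hC; rewrite mem_cat !mem_filter h1 hA.
  by apply: hC; rewrite mem_cat (mem_filter _ _ B) h1 hB ?orbT.
exists (resC A' B' x) => //; apply: der_res => //.
exact: leq_trans (width_sub hs) hw.
Qed.

Lemma G_nil : ~ G [::].
Proof.
move=> [D dD hD].
have eD : D = [::] by case: D dD hD => // l D _ /=; rewrite in_nil.
rewrite eD in dD; case: (der_seq dD) => P [g hw hin]; apply: hnoref.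
by exists P.
Qed.
End Gsec.

Section Enc.
Variables (F : cnf) (n w L : nat).
Hypothesis hnoref : ~ has_refutation_of_width (cnf_axioms F) w.
Variable W : nat.
Hypothesis hW : 4 * block_size n w L <= W.

Local Notation bs := (block_size n w L).
Local Notation ss := (slot_size n).
Definition blk i := iota (boff n w L i) bs.
Definition agree (a b : nat -> bool) (S : seq nat) := forall p, p \in S -> a p = b p.

Lemma decode_agree a b st len : (forall t, t < len -> a (st + t) = b (st + t)) ->
  decode a st len = decode b st len.
Proof. by move=> h; apply: eq_bigr => t _; rewrite h. Qed.

Lemma slot_in i s t : s < w -> t < ss -> soff n w L i s + t \in blk i.
Proof.
move=> hs ht; rewrite mem_iota /soff /boff /block_size.
have : s.+1 * ss <= w * ss by rewrite leq_mul2r hs orbT.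
rewrite /slot_size in ht *; lia.
Qed.

Lemma tag_in i t : t < 2 + 2 * idx_bits L -> toff n w L i + t \in blk i.
Proof. move=> ht; rewrite mem_iota /toff /boff /block_size; lia. Qed.

Lemma node_clause_agree a b i : agree a b (blk i) ->
  node_clause n w L a i = node_clause n w L b i.
Proof.
move=> hag.
have hp : forall s t, s < w -> t < ss -> a (soff n w L i s + t) = b (soff n w L i s + t).
  by move=> s t hs ht; apply: hag; apply: slot_in.
rewrite /node_clause.
have -> : [seq s <- iota 0 w | slot_present n w L a i s] = [seq s <- iota 0 w | slot_present n w L b i s].
  apply: (@eq_in_filter nat (slot_present n w L a i) (slot_present n w L b i)) => s; rewrite mem_iota /= add0n => hs.
  by rewrite /slot_present -(addn0 (soff _ _ _ _ _)) hp.
apply/eq_in_map => s; rewrite mem_filter mem_iota /= add0n => /andP [_ hs].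
rewrite /slot_lit.
have -> : a (soff n w L i s).+1 = b (soff n w L i s).+1.
  by have := hp s 1 hs isT; rewrite addn1.
congr pair; apply: decode_agree => t ht.
have := hp s t.+2 hs; rewrite /slot_size addnS addnS /=; apply.
by rewrite !ltnS.
Qed.

Lemma qv_agree a b i : agree a b (blk i) ->
  queried_vars n w L a i = queried_vars n w L b i.
Proof.
move=> hag.
have hp : forall t, t < 2 + 2 * idx_bits L -> a (toff n w L i + t) = b (toff n w L i + t).
  by move=> t ht; apply: hag; apply: tag_in.
have ta : tag_axiom n w L a i = tag_axiom n w L b i.
  by rewrite /tag_axiom -(addn0 (toff _ _ _ _)) hp //; lia.
have tr : tag_res n w L a i = tag_res n w L b i.
  by rewrite /tag_res -(addn1 (toff _ _ _ _)) hp //; lia.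
have p1 : Defs.pred1 n w L a i = Defs.pred1 n w L b i.
  by apply: decode_agree => t ht; rewrite -addnA hp //; lia.
have p2 : Defs.pred2 n w L a i = Defs.pred2 n w L b i.
  apply: decode_agree => t ht.
  have -> : toff n w L i + 2 + idx_bits L + t = toff n w L i + (2 + idx_bits L + t) by rewrite !addnA.
  by rewrite hp //; lia.
by rewrite /queried_vars /queried_blocks ta tr p1 p2.
Qed.

Local Notation Wax := (wLB_axiom F n w L).
Definition goodn a i := G F w (node_clause n w L a i).

Lemma size_flat_blk (s : seq nat) : size (flatten [seq iota (boff n w L j) bs | j <- s]) = size s * bs.
Proof. by elim: s => //= j s IH; rewrite size_cat size_iota IH mulSn. Qed.

Lemma size_qv a i : size (queried_vars n w L a i) <= 3 * bs.
Proof.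
rewrite /queried_vars size_flat_blk leq_mul2r; apply/orP; right.
rewrite /queried_blocks; case: ifP => // _; case: ifP => _ /=.
  by do 2 case: ifP.
by case: ifP.
Qed.

Lemma width_node a i : width (node_clause n w L a i) <= w.
Proof.
apply: leq_trans (width_size _) _; rewrite /node_clause size_map.
by rewrite size_filter (leq_trans (count_size _ _)) // size_iota.
Qed.

Lemma path_der a i : i < L -> ~~ node_valid F n w L a i -> der Wax W (path_clause n w L a i).
Proof.
move=> hi hv; apply: der_ax; first by exists i, a.
apply: leq_trans (width_size _) _; rewrite size_map.
by apply: leq_trans (size_qv a i) _; lia.
Qed.

Lemma blk_in_qv a i j : j \in queried_blocks n w L a i -> {subset blk j <= queried_vars n w L a i}.
Proof.
move=> hj p hp; apply/flattenP; exists (iota (boff n w L j) bs) => //.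
exact: (map_f (fun j => iota (boff n w L j) bs) hj).
Qed.

Lemma negc_sub a S T : {subset S <= T} -> subclause (negc a S) (negc a T).
Proof.
move=> h; apply/subP => l /mapP [p hp ->].
exact: (map_f (fun q => (q, ~~ a q)) (h _ hp)).
Qed.

Lemma inv i : i < L -> forall a, (~ goodn a i \/ i = L.-1) ->
  exists2 C, der Wax W C & subclause C (negc a (blk i)).
Proof.
elim/ltn_ind: i => i IH hiL a hbad.
apply: (complete (X := queried_vars n w L a i)).
  by rewrite size_map size_iota; apply: leq_trans hW; have := size_qv a i; lia.
move=> b.
pose b' := fun p => if p \in blk i then a p else b p.
have hag : agree a b' (blk i) by move=> p hp; rewrite /b' hp.
have eq := qv_agree hag.
suff [C dC hC] : exists2 C, der Wax W C & subclause C (negc b' (queried_vars n w L a i)).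
  exists C => //; apply: sub_trans hC _; apply/subP => l /mapP [p hp ->].
  rewrite mem_cat /b'; case: ifP => hpi.
    by rewrite (map_f (fun q => (q, ~~ a q)) hpi).
  by rewrite (map_f (fun q => (q, ~~ b q)) hp) orbT.
rewrite eq.
case hv : (node_valid F n w L b' i); last first.
  by exists (path_clause n w L b' i); [apply: path_der; rewrite ?hv | apply: subclause_refl].
have nb : ~ goodn b' i.
  case: hbad => [ng|ei].
    by rewrite /goodn -(node_clause_agree hag).
  move: hv; rewrite /node_valid ei eqxx /= => /and3P [_ /eqP e _].
  by rewrite /goodn e; apply: G_nil.
move: hv; rewrite /node_valid => /and3P [_ _].
case ta : (tag_axiom n w L b' i).
  move=> /hasP [A hA hc]; exfalso; apply: nb; apply: (G_ax hA hc); exact: width_node.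
case tr : (tag_res n w L b' i).
  move=> /and4P [hj hk _ hr].
  have [j [hji nj hjq]] : exists j, [/\ j < i, ~ goodn b' j & j \in queried_blocks n w L b' i].
    case: (classic (goodn b' (Defs.pred1 n w L b' i))) => g1.
      case: (classic (goodn b' (Defs.pred2 n w L b' i))) => g2.
        by exfalso; apply: nb; apply: (G_res g1 g2 hr); apply: width_node.
      exists (Defs.pred2 n w L b' i); split => //.
      by rewrite /queried_blocks ta tr /= hj hk !inE eqxx !orbT.
    exists (Defs.pred1 n w L b' i); split => //.
    by rewrite /queried_blocks ta tr /= hj hk !inE eqxx !orbT.
  case: (IH j hji (ltn_trans hji hiL) b' (or_introl nj)) => C dC hC.
  exists C => //; apply: sub_trans hC _; apply: negc_sub; exact: blk_in_qv.
move=> /andP [hj hs].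
have nj : ~ goodn b' (Defs.pred1 n w L b' i).
  by move=> g; apply: nb; apply: (G_weak g hs).
case: (IH _ hj (ltn_trans hj hiL) b' (or_introl nj)) => C dC hC.
exists C => //; apply: sub_trans hC _; apply: negc_sub; apply: blk_in_qv.
by rewrite /queried_blocks ta tr /= hj !inE eqxx !orbT.
Qed.
End Enc.

Lemma final F n w L W : ~ has_refutation_of_width (cnf_axioms F) w -> 0 < L ->
  4 * block_size n w L <= W -> has_refutation_of_width (wLB_axiom F n w L) W.
Proof.
move=> hno hL hW.
have [C dC hC] : exists2 C, der (wLB_axiom F n w L) W C & subclause C [::].
  apply: (complete (X := blk n w L L.-1)).
    by rewrite size_iota /=; apply: leq_trans hW; rewrite leq_pmull.
  move=> b; apply: (inv hno hW) => //; last by right.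
  by rewrite prednK.
have eC : C = [::] by case: C dC hC => // l C _ /=; rewrite in_nil.
rewrite eC in dC; case: (der_seq dC) => P [g hw hin].
by exists P; split.
Qed.

Lemma arith n w L : n <= L -> 0 < L ->
  4 * block_size n w L <= 12 * w.+1 * (up_log 2 (wLB_nvars n w L)).+1.
Proof.
move=> hn hL.
set U := up_log 2 _.
have hbs : 0 < block_size n w L by rewrite /block_size addn2 addSn.
have hLN : L <= wLB_nvars n w L by rewrite /wLB_nvars leq_pmulr.
have hv : var_bits n <= U by apply: leq_up_log; apply: leq_trans hn hLN.
have hi : idx_bits L <= U by apply: leq_up_log.
have h1 : w * var_bits n <= w * U by rewrite leq_mul2l hv orbT.
rewrite /block_size /slot_size; nia.
Qed.

Theorem theorem6p1 :
  exists c : nat,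
  forall (nv wF : nat -> nat) (F : nat -> cnf),
    (forall n, all (fun C => all (fun l : lit => l.1 < nv n) C) (F n)) ->
    (forall n, ~ satisfiable (F n)) ->
    (forall n, ~ has_refutation_of_width (cnf_axioms (F n)) (wF n)) ->
    forall n L : nat, 0 < L -> nv n <= L ->
      has_refutation_of_width (wLB_axiom (F n) (nv n) (wF n) L)
        (c * (wF n).+1 * (up_log 2 (wLB_nvars (nv n) (wF n) L)).+1).
Proof.
exists 12 => nv wF F _ _ hno n L hL hn.
apply: final => //; exact: arith.
Qed.
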